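(* Let $V$ be a vertex operator algebra and $n\in\mathbb{N}$, let $u\in V$ be homogeneous and $v\in V$, and set $Y^+(u,x)v=\sum_{k\ge1}u_{-k}v\,x^{k-1}$. If $\mathrm{wt}\,u>-n$, then, coefficientwise in $x$, \[ Y^+(u,x)v\ \sim_n\ \sum_{k=1}^{n-\mathrm{wt}\,u+1}u_{-k}v\,x^{k-1}+\sum_{m\ge n+1}\ \sum_{k=n-\mathrm{wt}\,u+2}^{2n+1}(-1)^{m-\mathrm{wt}\,u}\binom{m-n-1}{k-n+\mathrm{wt}\,u-2}\binom{m-k-\mathrm{wt}\,u}{2n-k+1}u_{-k}v\,x^{-\mathrm{wt}\,u+m}, \] and if $\mathrm{wt}\,u=-n$, then $Y^+(u,x)v\sim_n\sum_{k=1}^{2n+1}u_{-k}v\,x^{k-1}$.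
   Context: $Y(u,x)=\sum_{k\in\mathbb{Z}}u_kx^{-k-1}$, $\mathrm{wt}\,u$ is the $L(0)$-eigenvalue. For homogeneous $a$ and $b\in V$, $a\circ_n b=\mathrm{Res}_x\,(1+x)^{\mathrm{wt}\,a+n}Y(a,x)b\,x^{-2n-2}$ (extended linearly), $O_n^\circ(V)=\mathrm{span}\{a\circ_n b\}$, and $a\sim_n b$ means $a-b\in O_n^\circ(V)$; for formal power series it means each coefficient difference lies in $O_n^\circ(V)$. Binomial coefficients $\binom{p}{q}=p(p-1)\cdots(p-q+1)/q!$ for $p\in\mathbb{Z}$, $q\in\mathbb{N}$, and $0$ for $q<0$. *)

(* Defs.v *)
From HB Require Import structures.
From mathcomp Require Import all_boot all_order all_algebra.
Set Implicit Arguments. Unset Strict Implicit. Unset Printing Implicit Defensive.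
Import Order.TTheory GRing.Theory Num.Theory.
Local Open Scope ring_scope.

Section VOA.
Variables (K : fieldType) (V : lmodType K).

Definition binom (p q : int) : K :=
  match q with
  | Posz m => (\prod_(i < m) (p - (i : nat)%:Z)%:~R) / (m`!)%:R
  | Negz _ => 0
  end.

(* Y u k v = u_k v, i.e. Y(u,x) v = \sum_k u_k v x^{-k-1}. *)
Variable Y : V -> int -> V -> V.
Variables (vac om : V) (c : K).

Definition Lop (n : int) (v : V) : V := Y om (n + 1) v.

(* Vertex operator algebra axioms (FLM / Lepowsky-Li), in mode form;
   the Jacobi identity is stated as the equivalent Borcherds identity,
   whose (a priori infinite) sums are written as finite sums over a
   range beyond which all terms vanish by truncation. *)
Record isVOA : Prop := {
  Y_linl : forall (k : int) (a b w : V) (x : K),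
      Y (x *: a + b) k w = x *: Y a k w + Y b k w;
  Y_linr : forall (k : int) (u a b : V) (x : K),
      Y u k (x *: a + b) = x *: Y u k a + Y u k b;
  Y_trunc : forall u w : V, exists N : int, forall k : int, N <= k -> Y u k w = 0;
  Y_vac : forall (w : V) (k : int), Y vac k w = if k == -1 then w else 0;
  Y_creation_pos : forall (w : V) (k : int), 0 <= k -> Y w k vac = 0;
  Y_creation : forall w : V, Y w (-1) vac = w;
  Y_borcherds : forall (a b w : V) (p q r : int) (N : nat),
      (forall i : nat, (N <= i)%N ->
         [/\ Y a (r + i%:Z) b = 0, Y b (q + i%:Z) w = 0 & Y a (p + i%:Z) w = 0]) ->
      \sum_(i < N) binom p i *: Y (Y a (r + (i : nat)%:Z) b) (p + q - (i : nat)%:Z) w =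
      \sum_(i < N) ((-1) ^+ i * binom r i) *:
         (Y a (p + r - (i : nat)%:Z) (Y b (q + (i : nat)%:Z) w)
          - (-1) ^ r *: Y b (q + r - (i : nat)%:Z) (Y a (p + (i : nat)%:Z) w));
  virasoro : forall (m k : int) (w : V),
      Lop m (Lop k w) - Lop k (Lop m w) =
      (m - k)%:~R *: Lop (m + k) w
      + (if m + k == 0 then ((m ^+ 3 - m)%:~R / 12%:R * c) *: w else 0);
  L0_om : Lop 0 om = 2%:R *: om;
  L_minus1_deriv : forall (a w : V) (k : int),
      Y (Lop (-1) a) k w = - (k%:~R) *: Y a (k - 1) w;
  grading : forall w : V, exists s : seq (int * V),
      (forall t, t \in s -> Lop 0 t.2 = t.1%:~R *: t.2) /\
      w = \sum_(t <- s) t.2;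
  fin_dim : forall n : int, exists s : seq V, forall w : V,
      Lop 0 w = n%:~R *: w -> exists cs : seq K, w = \sum_(i < size s) cs`_i *: s`_i;
  lower_bounded : exists N : int, forall (n : int) (w : V),
      n < N -> Lop 0 w = n%:~R *: w -> w = 0
}.

(* y = a o_n b = Res_x (1+x)^{wt a + n} Y(a,x) b x^{-2n-2}
            = \sum_{j >= 0} binom(wt a + n, j) a_{j-2n-2} b  (a finite sum). *)
Definition circ_val (n : nat) (a : V) (wa : int) (b y : V) : Prop :=
  exists N0 : nat, forall N : nat, (N0 <= N)%N ->
    y = \sum_(j < N) binom (wa + n%:Z) (j : nat)%:Z *:
          Y a ((j : nat)%:Z - 2 * n%:Z - 2) b.

Definition is_circ (n : nat) (y : V) : Prop :=
  exists (a : V) (wa : int) (b : V), Lop 0 a = wa%:~R *: a /\ circ_val n a wa b y.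

Definition inO (n : nat) (x : V) : Prop :=
  exists s : seq (K * V), (forall t, t \in s -> is_circ n t.2) /\
    x = \sum_(t <- s) t.1 *: t.2.

Definition simO (n : nat) (a b : V) : Prop := inO n (a - b).

Definition sumz (a b : int) (F : int -> V) : V :=
  if a <= b then \sum_(i < absz (b - a + 1)) F (a + (i : nat)%:Z) else 0.

(* Coefficient of x^p (p >= 0) of the right-hand side in the case wt u = w > -n:
     sum_{k=1}^{n-w+1} u_{-k} v x^{k-1}
   + sum_{m >= n+1} sum_{k=n-w+2}^{2n+1} (-1)^{m-w} C(m-n-1, k-n+w-2)
                      C(m-k-w, 2n-k+1) u_{-k} v x^{-w+m}. *)
Definition rhs_coeff (n : nat) (u : V) (w : int) (v : V) (p : nat) : V :=
  let m := p%:Z + w in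
  (if (1 <= p%:Z + 1) && (p%:Z + 1 <= n%:Z - w + 1) then Y u (- (p%:Z + 1)) v else 0)
  + (if n%:Z + 1 <= m then
       sumz (n%:Z - w + 2) (2 * n%:Z + 1) (fun k =>
         ((-1) ^ (m - w) * binom (m - n%:Z - 1) (k - n%:Z + w - 2)
            * binom (m - k - w) (2 * n%:Z - k + 1)) *: Y u (- k) v)
     else 0).

End VOA.

(* Main.v *)
Require Import Defs.
From HB Require Import structures.
From mathcomp Require Import all_boot all_order all_algebra.
From mathcomp Require Import ring zify.
Import Order.TTheory GRing.Theory Num.Theory.
Local Open Scope ring_scope.

Section Aux.
Variable K : fieldType.
Hypothesis HK : [pchar K] =i pred0.

Lemma natK_neq0 (m : nat) : (m > 0)%N -> (m%:R : K) != 0.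
Proof. by move=> hm; rewrite (pcharf0P _).1 // -lt0n. Qed.

Lemma prod_nat_ffact (M j : nat) :
  \prod_(i < j) ((M%:Z - (i : nat)%:Z)%:~R : K) = (M ^_ j)%:R.
Proof.
elim: j => [|j IH]; first by rewrite big_ord0 ffactn0.
rewrite big_ord_recr /= IH ffactnSr natrM.
case: (leqP j M) => hj.
  by congr (_ * _); rewrite subzn // pmulrn.
by rewrite ffact_small // !mul0r.
Qed.

Lemma binom_nat (M j : nat) : binom K (M%:Z) (j%:Z) = ('C(M, j))%:R :> K.
Proof.
rewrite /binom prod_nat_ffact -bin_ffact natrM mulfK //.
by apply: natK_neq0; rewrite fact_gt0.
Qed.

Lemma binom_m1 (q : nat) : binom K (-1) (q%:Z) = (-1) ^+ q :> K.
Proof.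
rewrite /binom.
have -> : \prod_(i < q) ((-1 - (i : nat)%:Z)%:~R : K) = (-1) ^+ q * (q`!)%:R.
  elim: q => [|q IH]; first by rewrite big_ord0 expr0 mul1r.
  rewrite big_ord_recr /= IH factS natrM exprS.
  have -> : ((-1 - q%:Z)%:~R : K) = - (q.+1)%:R.
    by rewrite intrB -natz -addn1 natrD; ring.
  ring.
by rewrite mulfK //; apply: natK_neq0; rewrite fact_gt0.
Qed.


Definition bp (c : K) (q : nat) : {poly K} :=
  (\prod_(i < q) ('X - ((i : nat)%:R - c)%:P)) * ((q`!%:R)^-1)%:P.

Lemma binom_bp (z : int) (x c : K) (q : nat) :
  z%:~R = x + c -> binom K z q = (bp c q).[x].
Proof.
move=> hz; rewrite /binom /bp hornerM hornerC horner_prod.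
congr (_ * _); apply: eq_bigr => i _; rewrite hornerXsubC intrB hz /=.
by rewrite -natz /=; ring.
Qed.

Lemma size_bp c q : (size (bp c q) <= q.+1)%N.
Proof.
rewrite /bp; apply: leq_trans (size_polyMleq _ _) _.
rewrite size_prod_XsubC size_polyC.
have -> : size (index_enum 'I_q) = q by rewrite -[RHS]card_ord cardT enumT; unlock.
by case: (_ != 0); rewrite /= ?addn1 ?addn0 //= leqnSn.
Qed.

Lemma size_delta (N : nat) (P : {poly K}) :
  (size P <= N.+1)%N -> (size (P - (P \Po ('X - 1%:P)))%R <= N)%N.
Proof.
move=> hP; apply/leq_sizeP => j hj; rewrite coefB.

have hs : size (P \Po ('X - 1%:P)) = size P by rewrite size_comp_poly2 // size_XsubC.
case: (ltnP N j) => hNj.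
  by rewrite !nth_default ?subr0 // ?hs; apply: leq_trans hP _.
have ej : j = N by apply/eqP; rewrite eqn_leq hNj hj.
subst j.
case: (ltnP N (size P)) => hN.
  have eN : N = (size P).-1 by rewrite -(prednK (leq_ltn_trans (leq0n _) hN)); lia.
  have := lead_coef_comp P (q := 'X - 1%:P); rewrite size_XsubC lead_coefXsubC expr1n mulr1.
  move=> /(_ isT); rewrite !lead_coefE hs -eN => ->.
  by rewrite subrr.
by rewrite !nth_default ?subr0 // hs.
Qed.

Lemma fd (N : nat) (P : {poly K}) : (size P <= N)%N -> forall x : K,
  \sum_(i < N.+1) ((-1) ^+ i * ('C(N, i))%:R) * P.[x - (i : nat)%:R] = 0.
Proof.
elim: N P => [|N IH] P hP x.
  move: hP; rewrite leqn0 size_poly_eq0 => /eqP ->.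
  by rewrite big1 // => i _; rewrite horner0 mulr0.
have := IH _ (@size_delta N P hP) x.
set Q := P - _.
have hQ : forall y, Q.[y] = P.[y] - P.[y - 1].
  by move=> y; rewrite /Q hornerD hornerN horner_comp hornerXsubC.
under eq_bigr => i _ do rewrite hQ mulrDr mulrN.
rewrite big_split /= sumrN => h; apply: (etrans _ h).
have E1 : \sum_(i < N.+1) (-1) ^+ i * ('C(N, i))%:R * P.[x - (i : nat)%:R] =
   P.[x] + \sum_(i < N.+1) (-1) ^+ i.+1 * ('C(N, i.+1))%:R * P.[x - (i.+1)%:R].
  rewrite [in RHS]big_ord_recr /= bin_small // mulr0 mul0r addr0.
  rewrite big_ord_recl /= expr0 bin0 mul1r mul1r subr0; congr (_ + _).
rewrite E1 big_ord_recl /= expr0 bin0 mul1r mul1r subr0 -addrA; congr (_ + _).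
rewrite -sumrN -big_split /=; apply: eq_bigr => i _.
rewrite /bump /= !add1n binS natrD.
have -> : x - (i : nat)%:R - 1 = x - (i.+1)%:R by rewrite -natr1 opprD addrA.
rewrite exprS; ring.
Qed.

End Aux.


Section VOAproof.
Variables (K : fieldType) (V : lmodType K) (Y : V -> int -> V -> V).
Variables (vac om : V) (c : K).
Hypothesis HK : [pchar K] =i pred0.
Hypothesis HV : isVOA Y vac om c.
Variables (n : nat) (v : V).

Lemma Y0 a k : Y a k 0 = 0.
Proof.
have := Y_linr HV k a 0 0 1; rewrite scale1r addr0.
move=> /esym h; rewrite scale1r in h; apply: (addrI (Y a k 0)).
by rewrite addr0 h.
Qed.

Lemma YZ a k x b : Y a k (x *: b) = x *: Y a k b.
Proof. by have := Y_linr HV k a b 0 x; rewrite !addr0 Y0 addr0. Qed.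

Lemma wt_L1 a (wa : int) : Lop Y om 0 a = wa%:~R *: a ->
  Lop Y om 0 (Lop Y om (-1) a) = (wa + 1)%:~R *: Lop Y om (-1) a.
Proof.
move=> ha; have := virasoro HV 0 (-1) a.
rewrite add0r /= addr0 ha /Lop YZ -/(Lop Y om (-1) a).
move=> /eqP; rewrite subr_eq => /eqP ->.
by rewrite intrD scalerDl addrC.
Qed.

Lemma inO0 : inO Y om n 0.
Proof. by exists [::]; split => //; rewrite big_nil. Qed.

Lemma inOD x y : inO Y om n x -> inO Y om n y -> inO Y om n (x + y).
Proof.
move=> [s1 [h1 ->]] [s2 [h2 ->]]; exists (s1 ++ s2); split; last by rewrite big_cat.
by move=> t; rewrite mem_cat => /orP [/h1|/h2].
Qed.

Lemma inOZ x (k : K) : inO Y om n x -> inO Y om n (k *: x).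
Proof.
move=> [s [h ->]]; exists [seq (k * t.1, t.2) | t <- s]; split.
  by move=> t /mapP [t' /h ht ->].
by rewrite big_map scaler_sumr; apply: eq_bigr => t _; rewrite scalerA.
Qed.

Lemma inON x : inO Y om n x -> inO Y om n (- x).
Proof. by move=> h; rewrite -scaleN1r; apply: inOZ. Qed.

Lemma inOB x y : inO Y om n x -> inO Y om n y -> inO Y om n (x - y).
Proof. by move=> hx hy; apply: inOD => //; apply: inON. Qed.

Lemma inO_sum (m : nat) (F : 'I_m -> V) :
  (forall i, inO Y om n (F i)) -> inO Y om n (\sum_(i < m) F i).
Proof. move=> h; apply: big_ind => //; [exact: inO0 | exact: inOD]. Qed.

Lemma inO_circ y : is_circ Y om n y -> inO Y om n y.
Proof.
by move=> h; exists [:: (1, y)]; split; [move=> t; rewrite inE => /eqP -> | rewrite big_seq1 scale1r].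
Qed.

Definition TB (a : V) (M : nat) (s : int) (B : nat) : V :=
  \sum_(j < B) ('C(M, j))%:R *: Y a ((j : nat)%:Z - s) v.

Lemma TB_ext a M s d : TB a M s (M.+1 + d) = TB a M s M.+1.
Proof.
elim: d => [|d IH]; first by rewrite addn0.
by rewrite addnS /TB big_ord_recr /= -/(TB a M s _) IH bin_small ?scale0r ?addr0 //; lia.
Qed.

Lemma T_deriv a M (s : int) :
  TB (Lop Y om (-1) a) M.+1 s M.+3 =
  s%:~R *: TB a M (s + 1) M.+3 + (s - M.+1%:Z)%:~R *: TB a M s M.+2.
Proof.
rewrite /TB [LHS]big_ord_recl [in RHS]big_ord_recl scalerDr -addrA /=.
congr (_ + _).
  rewrite (L_minus1_deriv HV) !bin0 !scale1r.
  have -> : 0%:Z - s - 1 = 0%:Z - (s + 1) by lia.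
  by rewrite sub0r rmorphN opprK.
rewrite !scaler_sumr -big_split; apply: eq_bigr => j _ /=.
rewrite /bump /= add1n (L_minus1_deriv HV).
have -> : (j.+1)%:Z - s - 1 = (j : nat)%:Z - s by lia.
have -> : (j.+1)%:Z - (s + 1) = (j : nat)%:Z - s by lia.
rewrite !scalerA -scalerDl; congr (_ *: _).
have H : (j.+1)%:R * ('C(M, j.+1))%:R = (M%:R - (j : nat)%:R) * ('C(M, j))%:R :> K.
  case: (leqP j M) => hj.
    by rewrite -natrB // -!natrM mul_bin_left.
  by rewrite !bin_small ?mulr0 //; lia.
rewrite binS natrD.
apply/eqP; rewrite -subr_eq0; apply/eqP.
transitivity ((M%:R - (j : nat)%:R) * ('C(M, j))%:R - (j.+1)%:R * ('C(M, j.+1))%:R : K).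
  rewrite !intrB /= -!natz. ring.
by rewrite H subrr.
Qed.


Lemma T_inO (m : nat) : forall a (wa : int) (M : nat),
  Lop Y om 0 a = wa%:~R *: a -> wa + n%:Z = M%:Z ->
  inO Y om n (TB a M (2 * n%:Z + 2 + m%:Z) M.+1).
Proof.
elim: m => [|m IH] a wa M ha hw.
  apply: inO_circ; exists a, wa, v; split => //.
  exists M.+1 => N hN.
  have := TB_ext a M (2 * n%:Z + 2 + 0%:Z) (N - M.+1).
  rewrite (_ : (M.+1 + (N - M.+1))%N = N); last by lia.
  move=> <-; rewrite /TB; apply: eq_bigr => j _.
  rewrite hw (@binom_nat K HK); congr (_ *: Y a _ v); lia.
have hs : ((2 * n%:Z + 2 + m%:Z)%:~R : K) != 0.
  rewrite (_ : 2 * n%:Z + 2 + m%:Z = (2 * n + 2 + m)%N%:Z); last by lia.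
  by apply: (@natK_neq0 K HK); lia.
have key := T_deriv a M (2 * n%:Z + 2 + m%:Z).
have e3 : TB a M (2 * n%:Z + 2 + m%:Z + 1) M.+3 = TB a M (2 * n%:Z + 2 + m%:Z + 1) M.+1
  by have := TB_ext a M (2 * n%:Z + 2 + m%:Z + 1) 2; rewrite addn2.
have e2 : TB a M (2 * n%:Z + 2 + m%:Z) M.+2 = TB a M (2 * n%:Z + 2 + m%:Z) M.+1
  by have := TB_ext a M (2 * n%:Z + 2 + m%:Z) 1; rewrite addn1.
have e4 : TB (Lop Y om (-1) a) M.+1 (2 * n%:Z + 2 + m%:Z) M.+3 =
          TB (Lop Y om (-1) a) M.+1 (2 * n%:Z + 2 + m%:Z) M.+2
  by have := TB_ext (Lop Y om (-1) a) M.+1 (2 * n%:Z + 2 + m%:Z) 1; rewrite addn1.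
rewrite (_ : 2 * n%:Z + 2 + m.+1%:Z = 2 * n%:Z + 2 + m%:Z + 1); last by lia.
rewrite -e3.
have -> : TB a M (2 * n%:Z + 2 + m%:Z + 1) M.+3 =
   ((2 * n%:Z + 2 + m%:Z)%:~R)^-1 *: (TB (Lop Y om (-1) a) M.+1 (2 * n%:Z + 2 + m%:Z) M.+3
      - (2 * n%:Z + 2 + m%:Z - M.+1%:Z)%:~R *: TB a M (2 * n%:Z + 2 + m%:Z) M.+2).
  by rewrite key addrK scalerA mulVf // scale1r.
apply: inOZ; apply: inOB.
  rewrite e4; apply: (IH _ (wa + 1)); first exact: wt_L1.
  by rewrite -addrA (addrC 1) addrA hw; lia.
by apply: inOZ; rewrite e2; apply: (IH _ wa).
Qed.



Lemma sign_eq (a b x y : nat) : (a + 2 * x = b + 2 * y)%N -> (-1) ^+ a = (-1) ^+ b :> K.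
Proof.
move=> h.
have s2 z : (-1) ^+ (2 * z) = 1 :> K by rewrite exprM sqrrN expr1n expr1n.
have ha : (-1) ^+ (a + 2 * x) = (-1) ^+ a :> K by rewrite exprD s2 mulr1.
have hb : (-1) ^+ (b + 2 * y) = (-1) ^+ b :> K by rewrite exprD s2 mulr1.
by rewrite -ha h hb.
Qed.

Lemma sq_sign (k : nat) : (-1) ^+ k * (-1) ^+ k = 1 :> K.
Proof. by rewrite -exprMn mulrNN mulr1 expr1n. Qed.

Variables (u : V) (w : int) (N : nat).
Hypothesis hu : Lop Y om 0 u = w%:~R *: u.
Hypothesis hwN : w + n%:Z = N%:Z.

Definition K0 : int := n%:Z - w + 2.
Definition e (t : nat) : V := Y u (- (K0 + t%:Z)) v.
Definition d (t j : nat) : K :=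
  (-1) ^+ N.-1 * (-1) ^+ t * binom K t%:Z j%:Z * binom K (t%:Z - j%:Z - 1) (N.-1 - j)%N%:Z.
Definition E (t : nat) : V := e t - \sum_(j < N) d t j *: e j.

Lemma R_rel t : (N <= t)%N -> inO Y om n (\sum_(i < N.+1) ('C(N, i))%:R *: e (t - i)).
Proof.
move=> ht; have := @T_inO (t - N) u w N hu hwN.
congr (inO _ _ _ _); rewrite /TB; apply: eq_bigr => i _; congr (_ *: _).
rewrite /e /K0; congr (Y u _ v).
have hh : forall (j : nat), (j < N.+1)%N -> j%:Z - (2 * n%:Z + 2 + (t - N)%N%:Z) = - (n%:Z - w + 2 + (t - j)%N%:Z).
  move=> j hj; lia.
exact: hh.
Qed.

Lemma d_delta t j : (t < N)%N -> (j < N)%N -> d t j = (t == j)%:R.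
Proof.
move=> ht hj; rewrite /d.
case: (ltngtP t j) => htj.
- by rewrite (@binom_nat K HK) bin_small // mulr0 mul0r.
- rewrite (_ : t%:Z - j%:Z - 1 = (t - j - 1)%N%:Z); last by lia.
  by rewrite (@binom_nat K HK (t - j - 1)) bin_small ?mulr0 //; lia.
subst j; rewrite (@binom_nat K HK t t) binn.
rewrite (_ : t%:Z - t%:Z - 1 = -1); last by lia.
rewrite (@binom_m1 K HK).
have -> : (-1) ^+ N.-1 = (-1) ^+ t * (-1) ^+ (N.-1 - t) :> K.
  by rewrite -exprD subnKC //; lia.
transitivity (((-1) ^+ t * (-1) ^+ t) * ((-1) ^+ (N.-1 - t) * (-1) ^+ (N.-1 - t)) : K).
  by ring.
by rewrite !sq_sign mulr1.
Qed.

Lemma d_rec t j : (N <= t)%N -> (j < N)%N ->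
  \sum_(i < N.+1) ('C(N, i))%:R * d (t - i) j = 0.
Proof.
move=> ht hj.
set P := bp K 0 j * bp K (- (j.+1)%:R) (N.-1 - j).
have hP : (size P <= N)%N.
  apply: leq_trans (size_polyMleq _ _) _.
  have := @size_bp K 0 j; have := @size_bp K (- (j.+1)%:R) (N.-1 - j); lia.
have hd s : d s j = (-1) ^+ N.-1 * (-1) ^+ s * P.[s%:R].
  rewrite /d -mulrA hornerM; congr (_ * _).
  rewrite (@binom_bp K s%:Z s%:R 0 j); last by rewrite addr0.
  rewrite (@binom_bp K (s%:Z - j%:Z - 1) s%:R (- (j.+1)%:R)) //.
  by rewrite !intrB /= -natz -natr1; ring.
have := @fd K N P hP t%:R.
move=> h0.
transitivity ((-1) ^+ N.-1 * (-1) ^+ t *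
  \sum_(i < N.+1) ((-1) ^+ i * ('C(N, i))%:R) * P.[t%:R - (i : nat)%:R]); last first.
  by rewrite h0 mulr0.
rewrite mulr_sumr; apply: eq_bigr => i _.
have hi : (i <= t)%N by have := ltn_ord i; lia.
rewrite hd natrB //.
have -> : (-1) ^+ (t - i) = (-1) ^+ t * (-1) ^+ i :> K.
  by rewrite -[LHS]mulr1 -[X in _ * X = _](sq_sign i) mulrA -[in LHS]exprD subnK.
ring.
Qed.

Lemma E_inO t : inO Y om n (E t).
Proof.
elim/ltn_ind: t => t IH.
case: (ltnP t N) => ht.
  rewrite /E (bigD1 (Ordinal ht)) //= d_delta // eqxx scale1r big1 ?addr0 ?subrr.
    exact: inO0.
  move=> j hj; rewrite d_delta ?ltn_ord // (_ : (t == j) = false) ?scale0r //.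
  by apply: contraNF hj => /eqP h; apply/eqP/val_inj.
have HS : \sum_(i < N.+1) ('C(N, i))%:R *: E (t - i) =
          \sum_(i < N.+1) ('C(N, i))%:R *: e (t - i).
  rewrite /E; under eq_bigr do rewrite scalerBr.
  rewrite sumrB.
  suff -> : \sum_(i < N.+1) ('C(N, i))%:R *: \sum_(j < N) d (t - i) j *: e j = 0 by rewrite subr0.
  under eq_bigr do rewrite scaler_sumr.
  rewrite exchange_big /=; apply: big1 => j _.
  under eq_bigr do rewrite scalerA.
  by rewrite -scaler_suml d_rec ?ltn_ord // scale0r.
have -> : E t = \sum_(i < N.+1) ('C(N, i))%:R *: E (t - i) -
               \sum_(i < N) ('C(N, i.+1))%:R *: E (t - i.+1).
  by rewrite big_ord_recl /= bin0 scale1r subn0 addrK.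
apply: inOB; first by rewrite HS; exact: R_rel.
apply: inO_sum => i; apply: inOZ; apply: IH.
by have := ltn_ord i; lia.
Qed.

End VOAproof.


Theorem lemma3p3 (K : fieldType) (V : lmodType K) (Y : V -> int -> V -> V)
    (vac om : V) (c : K) (HK : [pchar K] =i pred0)
    (HV : isVOA Y vac om c) (n : nat) (u v : V) (w : int)
    (hu : Lop Y om 0 u = w%:~R *: u) :
  (- n%:Z < w ->
     forall p : nat,
       simO Y om n (Y u (- (p%:Z + 1)) v) (rhs_coeff Y n u w v p)) /\
  (w = - n%:Z ->
     forall p : nat,
       simO Y om n (Y u (- (p%:Z + 1)) v)
         (if (p <= 2 * n)%N then Y u (- (p%:Z + 1)) v else 0)).
Proof.
split.
- move=> hw p.
  have hN : w + n%:Z = (absz (w + n%:Z))%:Z by rewrite gez0_abs //; lia.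
  move: hN; set N := absz (w + n%:Z) => hN.
  have hN1 : (1 <= N)%N by lia.
  rewrite /simO /rhs_coeff.
  case: (boolP (n%:Z + 1 <= p%:Z + w)) => hc.
    rewrite [X in if X then _ else _](_ : _ = false); last first.
      by apply/negP => /andP [_ h]; lia.
    rewrite add0r /sumz ifT; last by lia.
    have := @E_inO K V Y vac om c HK HV n v u w N hu hN (p + N - 2 * n - 1)%N.
    rewrite /E /e /K0.
    have -> : absz (2 * n%:Z + 1 - (n%:Z - w + 2) + 1) = N.
      by rewrite (_ : 2 * n%:Z + 1 - (n%:Z - w + 2) + 1 = N%:Z) //; lia.
    have -> : Y u (- (p%:Z + 1)) v = Y u (- (n%:Z - w + 2 + (p + N - 2 * n - 1)%N%:Z)) v.
      by congr (Y u _ v); lia.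
    congr (inO _ _ _ (_ - _)); apply: eq_bigr => j _; congr (_ *: _).
    rewrite /d.
    rewrite (_ : p%:Z + w - w = p%:Z); last by lia.
    rewrite -exprnP.
    rewrite (_ : p%:Z + w - n%:Z - 1 = (p + N - 2 * n - 1)%N%:Z); last by lia.
    rewrite (_ : n%:Z - w + 2 + (j : nat)%:Z - n%:Z + w - 2 = (j : nat)%:Z); last by lia.
    rewrite (_ : p%:Z + w - (n%:Z - w + 2 + (j : nat)%:Z) - w =
                 (p + N - 2 * n - 1)%N%:Z - (j : nat)%:Z - 1); last by lia.
    rewrite (_ : 2 * n%:Z - (n%:Z - w + 2 + (j : nat)%:Z) + 1 = (N.-1 - j)%N%:Z); last first.
      by have := ltn_ord j; lia.
    congr (_ * _ * _); rewrite -exprD; apply: (@sign_eq K _ _ n N.-1); lia.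
  rewrite ifT; last by apply/andP; split; lia.
  rewrite addr0. have h0 := @inO0 K V Y om n. by rewrite -(subrr (Y u (- (p%:Z + 1)) v)) in h0.
move=> hw p.
have hN : w + n%:Z = 0%N%:Z by lia.
case: (leqP p (2 * n)%N) => hp.
  by rewrite /simO (@subrr V); exact: inO0.
rewrite /simO (@subr0 V).
have := @E_inO K V Y vac om c HK HV n v u w 0 hu hN (p - (2 * n + 1))%N.
rewrite /E big_ord0 subr0 /e /K0.
congr (inO _ _ _ (Y u _ v)); lia.
Qed.
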